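(* Let $n\in\mathbb{N}$, $a_1,\dots,a_n\in\mathbb{N}$, and $s_0,t_0\in\mathbb{N}$ with $s_0<t_0$ and $\gcd(s_0,t_0)=1$; put $w_0=\frac{s_0}{t_0}$. Then there are unique $w_1,\dots,w_n\in\mathbb{Q}\cap(0,1)$ with $a_jw_j+w_{j-1}=1$ for $j=1,\dots,n$. Write $w_j=\frac{s_j}{t_j}$ with $s_j,t_j\in\mathbb{N}$, $\gcd(s_j,t_j)=1$, and let $\beta_j=\gcd(t_{j-1}-s_{j-1},a_j)$ and $\alpha_j=a_j/\beta_j$ for $j=1,\dots,n$. Then for $j=1,\dots,n$ $$s_j=\frac{\rho(a_{j-1},\dots,a_1)\cdot t_0+(-1)^js_0}{\beta_j\cdots\beta_1},\qquad t_j=\alpha_jt_{j-1}=\alpha_j\cdots\alpha_1\cdot t_0,$$ and $$\prod_{j=1}^n\left(\frac1{s_j}\Lambda_{t_j}-\Lambda_1\right)=(-1)^n\Lambda_1+\sum_{j=1}^n(-1)^{n-j}\frac{\beta_j\cdots\beta_1}{t_0-s_0}\Lambda_{t_j}=(-1)^nE_1+\sum_{j=1}^n(-1)^{n-j}\frac{a_j\cdots a_1}{1-w_0}E_{t_j},$$ $$\prod_{j=1}^n\left(\frac1{w_j}-1\right)=\frac{\rho(a_n,a_{n-1},\dots,a_1)+(-1)^{n-1}w_0}{1-w_0}.$$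
   Context: $\rho(x_1,\dots,x_k)=x_1\cdots x_k-x_2\cdots x_k+\dots+(-1)^{k-1}x_k+(-1)^k$, with $\rho(\emptyset)=1$. $S^{UR}$ is the set of roots of unity and $\mathbb{Q}\langle S^{UR}\rangle$ its group ring over $\mathbb{Q}$ (elements $\sum b_j\langle\zeta_j\rangle$, product $\langle\zeta_1\rangle\langle\zeta_2\rangle=\langle\zeta_1\zeta_2\rangle$). $\Lambda_m=\sum_{a=0}^{m-1}\langle e^{2\pi i a/m}\rangle$ and $E_m=\frac1m\Lambda_m$. *)

(* Defs.v *)
From mathcomp Require Import all_boot all_order all_algebra.
Set Implicit Arguments. Unset Strict Implicit. Unset Printing Implicit Defensive.
Import Order.TTheory GRing.Theory Num.Theory.
Local Open Scope ring_scope.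

(* rho(x_1,...,x_k) = x_1...x_k - x_2...x_k + ... + (-1)^(k-1) x_k + (-1)^k,
   i.e. sum_{i=0}^{k} (-1)^i * x_{i+1}...x_k  (0-based: prod of s`_l, i <= l < k).
   rho [::] = 1. *)
Definition rho (s : seq rat) : rat :=
  \sum_(i < (size s).+1) (-1) ^+ i * \prod_(i <= l < size s) s`_l.

(* ---- The group ring Q<S^UR> ----
   A root of unity e^{2 pi i q} (q in Q) is represented by the rational q,
   two rationals denoting the same root iff they differ by an integer
   (S^UR is isomorphic to Q/Z via q mod 1 |-> e^{2 pi i q}).
   An element sum_j b_j <zeta_j> is represented by a finite list of pairs
   (b_j, q_j), with zeta_j = e^{2 pi i q_j}; the element it denotes is its
   coefficient function [gcoef x], and two lists denote the same group-ring
   element iff their coefficient functions agree ([geq]). *)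
Definition gr := seq (rat * rat).

Definition gcoef (x : gr) (z : rat) : rat :=
  \sum_(p <- x | (p.2 - z) \is a Num.int) p.1.

Definition gr_eq (x y : gr) : Prop := forall z : rat, gcoef x z = gcoef y z.

Definition gadd (x y : gr) : gr := x ++ y.
Definition gscale (c : rat) (x : gr) : gr := [seq (c * p.1, p.2) | p <- x].
Definition gsub (x y : gr) : gr := gadd x (gscale (-1) y).
Definition gmul (x y : gr) : gr := [seq (p.1 * q.1, p.2 + q.2) | p <- x, q <- y].
Definition gone : gr := [:: (1, 0)].
Definition gzero : gr := [::].
Definition gprod (xs : seq gr) : gr := foldr gmul gone xs.
Definition gsum (xs : seq gr) : gr := foldr gadd gzero xs.

Definition Lambda (m : nat) : gr := [seq (1, a%:R / m%:R) | a <- iota 0 m].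
Definition Egr (m : nat) : gr := gscale (m%:R)^-1 (Lambda m).

(* Main.v *)
Require Import Defs.
From mathcomp Require Import all_boot all_order all_algebra zify ring lra.
Import Order.TTheory GRing.Theory Num.Theory.
Local Open Scope ring_scope.

Lemma gcoef_cat x y z : gcoef (x ++ y) z = gcoef x z + gcoef y z.
Proof. by rewrite /gcoef big_cat. Qed.

Lemma gcoef_scale c x z : gcoef (gscale c x) z = c * gcoef x z.
Proof. by rewrite /gcoef big_map mulr_sumr. Qed.

Lemma gcoef_sum l z : gcoef (gsum l) z = \sum_(x <- l) gcoef x z.
Proof.
elim: l => [|x l IH]; first by rewrite big_nil /gcoef big_nil.
by rewrite big_cons /= /gadd gcoef_cat IH.
Qed.

Lemma gcoef_mull x y z : gcoef (gmul x y) z = \sum_(p <- x) p.1 * gcoef y (z - p.2).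
Proof.
rewrite /gcoef /gmul big_mkcond big_allpairs_dep /=.
apply: eq_bigr => p _; rewrite mulr_sumr [RHS]big_mkcond /=.
apply: eq_bigr => q _.
have -> : p.2 + q.2 - z = q.2 - (z - p.2) by ring.
by case: ifP; rewrite ?mulr0.
Qed.

Lemma gcoef_mulr x y z : gcoef (gmul x y) z = \sum_(q <- y) q.1 * gcoef x (z - q.2).
Proof.
rewrite /gcoef /gmul big_mkcond big_allpairs_dep /= exchange_big /=.
apply: eq_bigr => q _; rewrite mulr_sumr [RHS]big_mkcond /=.
apply: eq_bigr => p _.
have -> : p.2 + q.2 - z = p.2 - (z - q.2) by ring.
by case: ifP; rewrite ?mulr0 // mulrC.
Qed.

Lemma gcoef_prod_rcons l x z : gcoef (gprod (rcons l x)) z = gcoef (gmul (gprod l) x) z.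
Proof.
elim: l z => [|y l IH] z /=.
  rewrite gcoef_mulr gcoef_mull /gone !big_cons !big_nil /=.
  by rewrite !subr0 !mul1r ?addr0.
rewrite gcoef_mull gcoef_mulr.
under eq_bigr do rewrite IH gcoef_mulr.
under [RHS]eq_bigr do rewrite gcoef_mull.
under eq_bigr do rewrite mulr_sumr.
under [RHS]eq_bigr do rewrite mulr_sumr.
rewrite exchange_big /=; apply: eq_bigr => p _; apply: eq_bigr => q _.
by rewrite mulrCA; congr (_ * (_ * _)); congr gcoef; ring.
Qed.

Lemma gcoef_Lambda k z : gcoef (Lambda k) z =
  \sum_(0 <= a < k) ((a%:R / k%:R - z) \is a Num.int)%:R.
Proof.
rewrite /gcoef /Lambda big_map big_mkcond /index_iota subn0.
by apply: eq_bigr => a _ /=; case: ifP.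
Qed.

Lemma int1D (y : rat) : (1 + y \is a Num.int) = (y \is a Num.int).
Proof. by rewrite rpredDl. Qed.

Lemma gcoef_Lambda_shift1 k z : (0 < k)%N ->
  gcoef (Lambda k) (z - 1 / k%:R) = gcoef (Lambda k) z.
Proof.
case: k => // k _; rewrite !gcoef_Lambda.
rewrite [RHS]big_nat_recl // big_nat_recr //= addrC; congr (_ + _).
  have -> : k%:R / k.+1%:R - (z - 1 / k.+1%:R) = 1 + (0 / k.+1%:R - z).
    by rewrite -natr1; field; rewrite natr1 pnatr_eq0.
  by rewrite int1D.
apply: eq_bigr => a _.
have -> : a.+1%:R / k.+1%:R - z = a%:R / k.+1%:R - (z - 1 / k.+1%:R).
  by rewrite -[a.+1]addn1 natrD mulrDl; ring.
by [].
Qed.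

Lemma gcoef_Lambda_shift k z b : (0 < k)%N ->
  gcoef (Lambda k) (z - b%:R / k%:R) = gcoef (Lambda k) z.
Proof.
move=> k0; elim: b => [|b IH]; first by rewrite mul0r subr0.
have -> : z - b.+1%:R / k%:R = (z - b%:R / k%:R) - 1 / k%:R.
  by rewrite -[b.+1]addn1 natrD mulrDl; ring.
by rewrite gcoef_Lambda_shift1.
Qed.

Lemma gcoef_Lambda_conv m t z : (0 < m)%N -> (0 < t)%N -> (m %| t)%N ->
  \sum_(0 <= a < t) gcoef (Lambda m) (z - a%:R / t%:R) = m%:R * gcoef (Lambda t) z.
Proof.
move=> m0 t0 dv.
under eq_bigr do rewrite gcoef_Lambda.
rewrite exchange_big /=.
transitivity (\sum_(0 <= b < m) gcoef (Lambda t) z); last first.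
  by rewrite sumr_const_nat subn0 mulr_natl.
apply: eq_bigr => b _.
set c := (t %/ m)%N.
have ht : t = (c * m)%N by rewrite divnK.
have c0 : (0 < c)%N by move: t0; rewrite ht muln_gt0 => /andP[].
rewrite -(@gcoef_Lambda_shift t z (b * c) t0) gcoef_Lambda.
apply: eq_bigr => a _.
have -> : (b * c)%:R / t%:R = b%:R / m%:R :> rat.
  rewrite ht !natrM; field.
  by rewrite !pnatr_eq0 -!lt0n c0 m0.
by have -> : a%:R / t%:R - (z - b%:R / m%:R) = b%:R / m%:R - (z - a%:R / t%:R) by ring.
Qed.

Lemma gcoef_mul_Lambda X k z :
  gcoef (gmul X (Lambda k)) z = \sum_(0 <= a < k) gcoef X (z - a%:R / k%:R).
Proof.
rewrite gcoef_mulr /Lambda big_map /index_iota subn0.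
by apply: eq_bigr => a _ /=; rewrite mul1r.
Qed.

Lemma gcoef_mul_sub X y1 y2 z :
  gcoef (gmul X (gsub y1 y2)) z = gcoef (gmul X y1) z - gcoef (gmul X y2) z.
Proof.
rewrite /gsub /gadd !gcoef_mulr big_cat /gscale big_map /=; congr (_ + _).
by rewrite -sumrN; apply: eq_bigr => q _; rewrite mulN1r mulNr.
Qed.

Lemma gcoef_mul_scale X c y z :
  gcoef (gmul X (gscale c y)) z = c * gcoef (gmul X y) z.
Proof.
rewrite !gcoef_mulr /gscale big_map mulr_sumr /=.
by apply: eq_bigr => q _; rewrite mulrA.
Qed.

Lemma rho_nil : rho [::] = 1.
Proof. by rewrite /rho /= big_ord1 expr0 mul1r big_geq. Qed.

Lemma rho_cons x l : rho (x :: l) = x * \prod_(y <- l) y - rho l.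
Proof.
rewrite [\prod_(y <- l) y](big_nth 0) /rho /= big_ord_recl /= expr0 mul1r big_nat_recl //.
congr (_ + _); rewrite -sumrN; apply: eq_bigr => i _.
rewrite /bump /= add1n exprS mulN1r mulNr; congr (- (_ * _)).
by rewrite big_add1.
Qed.

Lemma iota1S m : iota 1 m.+1 = rcons (iota 1 m) m.+1.
Proof. by rewrite -cats1 -[m.+1]addn1 iotaD add1n addn1. Qed.

Lemma rev_map_iota (f : nat -> rat) k :
  rev [seq f i | i <- iota 1 k.+1] = f k.+1 :: rev [seq f i | i <- iota 1 k].
Proof. by rewrite -[k.+1]addn1 iotaD map_cat rev_cat /= add1n addn1. Qed.

Lemma prod_rev_map (f : nat -> rat) k :
  \prod_(y <- rev [seq f i | i <- iota 1 k]) y = \prod_(1 <= i < k.+1) f i.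
Proof. by rewrite big_rev big_map /index_iota subSS subn0. Qed.

Lemma rho_step (f : nat -> rat) k :
  rho (rev [seq f i | i <- iota 1 k.+1]) =
  \prod_(1 <= i < k.+2) f i - rho (rev [seq f i | i <- iota 1 k]).
Proof.
by rewrite rev_map_iota rho_cons prod_rev_map [in RHS]big_nat_recr //= mulrC.
Qed.
Lemma reduce (s' t' s t a : nat) : coprime s' t' -> (s' < t')%N -> (0 < a)%N ->
  coprime s t -> (0 < t)%N -> (0 < s)%N -> (s * (a * t') = t * (t' - s'))%N ->
  (gcdn (t' - s') a * s = t' - s')%N /\ t = (a %/ gcdn (t' - s') a * t')%N.
Proof.
move=> cst lst a0 cp t0 s0 E.
set d := (t' - s')%N in E *.
have d0 : (0 < d)%N by rewrite /d subn_gt0.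
have Hsd : (s %| d)%N by rewrite -(Gauss_dvdr _ cp) -E dvdn_mulr.
case/dvdnP: Hsd => k Hk.
have k0 : (0 < k)%N by move: d0; rewrite Hk muln_gt0 => /andP[].
have E2 : (a * t' = t * k)%N.
  by apply/eqP; rewrite -(eqn_pmul2l s0) E Hk mulnA mulnC.
have cdt : coprime d t'.
  have Et : t' = (d + s')%N by rewrite /d subnK // ltnW.
  by rewrite /coprime Et gcdnDl gcdnC -gcdnDr -Et; exact: cst.
have ckt : coprime k t' by apply: coprime_dvdl cdt; rewrite Hk dvdn_mulr.
have : (k %| a)%N by rewrite -(Gauss_dvdl _ ckt) E2 dvdn_mull.
case/dvdnP => al Ha.
have Ht : t = (al * t')%N.
  by apply/eqP; rewrite -(eqn_pmul2r k0) -E2 Ha mulnAC.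
have cs : coprime s al by apply: coprime_dvdr cp; rewrite Ht dvdn_mulr.
have Hg : gcdn d a = k by rewrite Hk Ha mulnC -muln_gcdl (eqP cs) mul1n.
by rewrite Hg Ha mulnK // Hk mulnC.
Qed.
Theorem lemma4p2 (n : nat) (a : nat -> nat) (s0 t0 : nat)
  (ha : forall j, (1 <= j <= n)%N -> (0 < a j)%N)
  (hs0 : (0 < s0)%N) (hst : (s0 < t0)%N) (hcop : coprime s0 t0) :
  let w0 : rat := s0%:R / t0%:R in
  let Wsol (w : nat -> rat) :=
    w 0%N = w0 /\
    (forall j, (1 <= j <= n)%N ->
       0 < w j < 1 /\ (a j)%:R * w j + w j.-1 = 1) in
  (exists w, Wsol w) /\
  (forall w w', Wsol w -> Wsol w' -> forall j, (j <= n)%N -> w j = w' j) /\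
  (forall (w : nat -> rat) (s t : nat -> nat),
     Wsol w -> s 0%N = s0 -> t 0%N = t0 ->
     (forall j, (1 <= j <= n)%N ->
        coprime (s j) (t j) /\ (0 < t j)%N /\ w j = (s j)%:R / (t j)%:R) ->
     let beta j := gcdn (t j.-1 - s j.-1)%N (a j) in
     let alpha j := (a j %/ beta j)%N in
     (forall j, (1 <= j <= n)%N ->
        (s j)%:R = (rho (rev [seq (a i)%:R | i <- iota 1 j.-1]) * t0%:R
                    + (-1) ^+ j * s0%:R) / (\prod_(1 <= i < j.+1) beta i)%N%:R
        /\ t j = (alpha j * t j.-1)%N
        /\ t j = (\prod_(1 <= i < j.+1) alpha i * t0)%N) /\
     gr_eq (gprod [seq gsub (gscale (s j)%:R^-1 (Lambda (t j))) (Lambda 1)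
                | j <- iota 1 n])
         (gadd (gscale ((-1) ^+ n) (Lambda 1))
               (gsum [seq gscale ((-1) ^+ (n - j)
                         * (\prod_(1 <= i < j.+1) beta i)%N%:R
                         / (t0%:R - s0%:R)) (Lambda (t j))
                     | j <- iota 1 n])) /\
     gr_eq (gadd (gscale ((-1) ^+ n) (Lambda 1))
               (gsum [seq gscale ((-1) ^+ (n - j)
                         * (\prod_(1 <= i < j.+1) beta i)%N%:R
                         / (t0%:R - s0%:R)) (Lambda (t j))
                     | j <- iota 1 n]))
         (gadd (gscale ((-1) ^+ n) (Egr 1))
               (gsum [seq gscale ((-1) ^+ (n - j)
                         * (\prod_(1 <= i < j.+1) a i)%N%:R
                         / (1 - w0)) (Egr (t j))
                     | j <- iota 1 n])) /\
     \prod_(1 <= j < n.+1) ((w j)^-1 - 1)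
       = (rho (rev [seq (a i)%:R | i <- iota 1 n]) + (-1) ^ (n%:Z - 1) * w0)
         / (1 - w0)).
Proof.
move=> w0 Wsol.
have t0pos : (0 < t0)%N by apply: (ltn_trans hs0 hst).
have w0pos : 0 < w0 < 1.
  by rewrite /w0 divr_gt0 ?ltr0n //= ltr_pdivrMr ?ltr0n // mul1r ltr_nat.
have aR : forall j, (1 <= j <= n)%N -> 1 <= (a j)%:R :> rat.
  by move=> j hj; rewrite ler1n ha.
have aR0 : forall j, (1 <= j <= n)%N -> (a j)%:R != 0 :> rat.
  by move=> j hj; rewrite pnatr_eq0 -lt0n ha.
have Hrec : forall w, Wsol w -> forall j, (1 <= j <= n)%N ->
    w j = (1 - w j.-1) / (a j)%:R.
  move=> w [_ Hw] j hj; have [_ E] := Hw j hj.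
  move/(congr1 (fun x => x - w j.-1)): E; rewrite addrK => <-.
  by rewrite mulrC mulKf // aR0.
split.
  pose wf := fix f (j : nat) : rat :=
    if j is j'.+1 then (1 - f j') / (a j'.+1)%:R else w0.
  have Hb : forall j, (j <= n)%N -> 0 < wf j < 1.
    elim => [|j IH] hj //=.
    have /andP[h1 h2] := IH (ltnW hj).
    have ha1 := aR j.+1 hj.
    have ha0 : 0 < (a j.+1)%:R :> rat by apply: lt_le_trans ha1.
    rewrite divr_gt0 ?subr_gt0 //= ltr_pdivrMr //; lra.
  exists wf; split => // j hj; split; first by apply: Hb; case/andP: hj.
  case: j hj => // j hj /=.
  by field; apply: aR0.
split.
  move=> w w' Hw Hw'; elim => [|j IH] hj; first by rewrite Hw.1 Hw'.1.
  have hj' : (1 <= j.+1 <= n)%N by rewrite hj.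
  by rewrite (Hrec w Hw _ hj') (Hrec w' Hw' _ hj') IH // ltnW.
move=> w s t Hw hs ht Hst beta alpha.
have [Hw0 Hwj] := Hw.
have Hwst : forall j, (j <= n)%N -> w j = (s j)%:R / (t j)%:R.
  case => [|j] hj; first by rewrite Hw0 hs ht.
  by have [_ [_ ->]] := Hst j.+1 (hj : (1 <= j.+1 <= n)%N).
have K0 : forall j, (j <= n)%N ->
    [/\ coprime (s j) (t j), (0 < t j)%N, (0 < s j)%N & (s j < t j)%N].
  case => [|j] hj; first by rewrite hs ht.
  have hj' : (1 <= j.+1 <= n)%N by rewrite hj.
  have [c [tp E]] := Hst _ hj'.
  have [/andP[p1 p2] _] := Hwj _ hj'.
  rewrite E in p1 p2.
  have tR : 0 < (t j.+1)%:R :> rat by rewrite ltr0n.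
  split => //.
    by move: p1; rewrite pmulr_lgt0 ?invr_gt0 // ltr0n.
  by move: p2; rewrite ltr_pdivrMr // mul1r ltr_nat.
have K1 : forall j, (1 <= j <= n)%N ->
    (beta j * s j = t j.-1 - s j.-1)%N /\ t j = (alpha j * t j.-1)%N.
  move=> j hj; have /andP[j1 jn] := hj.
  have jn' : (j.-1 <= n)%N by apply: leq_trans (leq_pred j) jn.
  have [c' t'p s'p lt'] := K0 j.-1 jn'.
  have [c tp sp lt] := K0 j jn.
  apply: reduce => //; first exact: ha.
  have [_ E] := Hwj j hj.
  rewrite (Hwst _ jn) (Hwst _ jn') in E.
  apply/eqP; rewrite -(eqr_nat rat).
  rewrite natrM natrM natrM (natrB _ (ltnW lt')); apply/eqP.
  have tR : (t j)%:R != 0 :> rat by rewrite pnatr_eq0 -lt0n.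
  have tR' : (t j.-1)%:R != 0 :> rat by rewrite pnatr_eq0 -lt0n.
  have key : (s j)%:R * ((a j)%:R * (t j.-1)%:R) =
     ((a j)%:R * ((s j)%:R / (t j)%:R) + (s j.-1)%:R / (t j.-1)%:R)
       * (t j)%:R * (t j.-1)%:R - (t j)%:R * (s j.-1)%:R :> rat.
    by field; rewrite tR tR'.
  by rewrite key E mul1r; ring.
have K2 : forall j, (1 <= j <= n)%N -> (beta j * alpha j = a j)%N.
  by move=> j hj; rewrite mulnC divnK // dvdn_gcdr.
have K3 : forall j, (1 <= j <= n)%N -> (0 < beta j)%N.
  by move=> j hj; rewrite gcdn_gt0 ha ?orbT.
have K4 : forall j, (j <= n)%N -> t j = (\prod_(1 <= i < j.+1) alpha i * t0)%N.
  elim => [|j IH] hj; first by rewrite big_geq // mul1n ht.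
  have hj' : (1 <= j.+1 <= n)%N by rewrite hj.
  rewrite (K1 _ hj').2 IH; last exact: ltnW.
  rewrite [in RHS]big_nat_recr; last by [].
  by rewrite mulnA; congr (_ * _); exact: mulnC.
have K5 : forall j k, (j <= k <= n)%N -> (t j %| t k)%N.
  move=> j; elim => [|k IH] /andP[jk kn]; first by case: j jk.
  rewrite leq_eqVlt in jk; case/orP: jk => [/eqP -> //| jk].
  have hk' : (1 <= k.+1 <= n)%N by rewrite kn.
  rewrite (K1 _ hk').2 /=; apply: dvdn_mull; apply: IH.
  by rewrite -ltnS jk ltnW.
pose Bn j := (\prod_(1 <= i < j.+1) beta i)%N.
have K6 : forall j, (j <= n)%N -> (0 < Bn j)%N.
  elim => [|j IH] hj; first by rewrite /Bn big_geq.
  have hj' : (1 <= j.+1 <= n)%N by rewrite hj.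
  rewrite /Bn big_nat_recr; last by [].
  rewrite muln_gt0 -/(Bn j) IH; last exact: ltnW.
  exact: K3.
have K7 : forall j, (j <= n)%N -> (t j * Bn j = \prod_(1 <= i < j.+1) a i * t0)%N.
  elim => [|j IH] hj; first by rewrite /Bn !big_geq // muln1 mul1n ht.
  have hj' : (1 <= j.+1 <= n)%N by rewrite hj.
  rewrite (K1 _ hj').2 /Bn big_nat_recr; last by [].
  rewrite [in RHS]big_nat_recr; last by [].
  rewrite -/(Bn j) -(K2 _ hj').
  have -> : (alpha j.+1 * t j * (Bn j * beta j.+1) =
             (beta j.+1 * alpha j.+1) * (t j * Bn j))%N.
    by apply/eqP; rewrite -(eqr_nat rat) !natrM; apply/eqP; ring.
  rewrite IH; last exact: ltnW.
  by apply/eqP; rewrite -(eqr_nat rat) !natrM; apply/eqP; ring.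
pose rhom m := rho (rev [seq ((a i)%:R : rat) | i <- iota 1 m]).
pose Pm m := \prod_(1 <= i < m.+1) ((a i)%:R : rat).
have K1R : forall j, (1 <= j <= n)%N ->
    (beta j)%:R * (s j)%:R = (t j.-1)%:R - (s j.-1)%:R :> rat.
  move=> j hj; have /andP[j1 jn] := hj.
  have jn' : (j.-1 <= n)%N by apply: leq_trans (leq_pred j) jn.
  have [_ _ _ lt'] := K0 j.-1 jn'.
  by rewrite -natrM (K1 _ hj).1 natrB; last exact: ltnW.
have K7R : forall j, (j <= n)%N -> (t j)%:R * (Bn j)%:R = Pm j * t0%:R :> rat.
  by move=> j hj; rewrite -natrM K7 // natrM natr_prod.
have K8' : forall m, (m.+1 < n)%N ->
    (s m.+2)%:R * (Bn m.+2)%:R = ((t m.+1)%:R - (s m.+1)%:R) * (Bn m.+1)%:R :> rat.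
  move=> m hm; have hj : (1 <= m.+2 <= n)%N by rewrite hm.
  rewrite {1}/Bn big_nat_recr; last by [].
  rewrite -/(Bn m.+1) natrM -(K1R _ hj); ring.
have K8 : forall m, (m < n)%N ->
    (s m.+1)%:R * (Bn m.+1)%:R = rhom m * t0%:R + (-1) ^+ m.+1 * s0%:R :> rat.
  elim => [|m IH] hm.
    have hj : (1 <= 1 <= n)%N by rewrite hm.
    rewrite /Bn big_nat1 mulrC (K1R 1 hj) hs ht /rhom /= rho_nil; ring.
  rewrite K8' // mulrBl K7R; last exact: ltnW.
  rewrite IH; last exact: ltnW.
  rewrite /rhom rho_step -/(rhom m) /Pm !exprS; ring.
have K9 : forall m, (m < n)%N ->
    (-1) ^+ m * (t0%:R - s0%:R)
    + \sum_(j <- iota 1 m) (-1) ^+ (m - j) * (Bn j)%:R * (t j)%:R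
    = (s m.+1)%:R * (Bn m.+1)%:R :> rat.
  elim => [|m IH] hm.
    rewrite big_nil addr0 expr0 mul1r K8 // /rhom /= rho_nil; ring.
  rewrite iota1S -cats1 big_cat big_seq1 subnn expr0 mul1r.
  have -> : \sum_(j <- iota 1 m) (-1) ^+ (m.+1 - j) * (Bn j)%:R * (t j)%:R
      = - \sum_(j <- iota 1 m) (-1) ^+ (m - j) * (Bn j)%:R * (t j)%:R :> rat.
    rewrite -sumrN !big_seq; apply: eq_bigr => j; rewrite mem_iota => /andP[_ hj'].
    rewrite add1n ltnS in hj'.
    by rewrite subSn // exprS mulN1r !mulNr.
  move: (\sum_(j <- iota 1 m) _) (IH (ltnW hm)) => S IH'.
  rewrite K8' // mulrBl -IH' exprS /=; ring.
have D0 : (t0%:R - s0%:R) != 0 :> rat.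
  by rewrite subr_eq0 eqr_nat gtn_eqF.
split.
  move=> j hj; have /andP[j1 jn] := hj.
  case: j j1 hj jn => // m _ hj jn.
  split; last split.
  - have B0 : (Bn m.+1)%:R != 0 :> rat by rewrite pnatr_eq0 -lt0n K6.
    have E := K8 m jn.
    rewrite /= -/(rhom m) -E mulfK //.
  - exact: (K1 _ hj).2.
  - exact: K4.
have K10 : forall m, (m <= n)%N -> forall z,
    gcoef (gprod [seq gsub (gscale (s j)%:R^-1 (Lambda (t j))) (Lambda 1)
                 | j <- iota 1 m]) z =
    (-1) ^+ m * gcoef (Lambda 1) z
    + \sum_(j <- iota 1 m) ((-1) ^+ (m - j) * (Bn j)%:R / (t0%:R - s0%:R))
                           * gcoef (Lambda (t j)) z.
  elim => [|m IH] hm z.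
    by rewrite big_nil addr0 expr0 mul1r /gcoef /Lambda /gone /= mulr0n mul0r.
  have hj : (1 <= m.+1 <= n)%N by rewrite hm.
  have [_ tp sp _] := K0 m.+1 hm.
  have conv : forall j, (j <= m)%N ->
      \sum_(0 <= a < t m.+1) gcoef (Lambda (t j)) (z - a%:R / (t m.+1)%:R)
      = (t j)%:R * gcoef (Lambda (t m.+1)) z.
    move=> j jm; have [_ tjp _ _] := K0 j (leq_trans jm (ltnW hm)).
    apply: gcoef_Lambda_conv => //; apply: K5.
    by rewrite (leqW jm) hm.
  rewrite iota1S map_rcons gcoef_prod_rcons gcoef_mul_sub gcoef_mul_scale.
  rewrite !gcoef_mul_Lambda big_nat1 mulr0n mul0r subr0.
  have IH' := IH (ltnW hm).
  under eq_bigr do rewrite IH'.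
  rewrite IH'.
  rewrite big_split /= -mulr_sumr.
  have c1 := @gcoef_Lambda_conv 1 (t m.+1) z (ltn0Sn 0) tp (dvd1n _).
  rewrite c1 mul1r exchange_big /=.
  have S1 : \sum_(j <- iota 1 m) \sum_(0 <= i < t m.+1)
      (-1) ^+ (m - j) * (Bn j)%:R / (t0%:R - s0%:R) *
         gcoef (Lambda (t j)) (z - i%:R / (t m.+1)%:R) =
      ((\sum_(j <- iota 1 m) (-1) ^+ (m - j) * (Bn j)%:R * (t j)%:R)
         / (t0%:R - s0%:R)) * gcoef (Lambda (t m.+1)) z.
    rewrite mulr_suml mulr_suml !big_seq; apply: eq_bigr => j.
    rewrite mem_iota add1n ltnS => /andP[_ jm].
    by rewrite -mulr_sumr conv //; ring.
  rewrite S1 -cats1 big_cat big_seq1 /= subnn expr0 mul1r.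
  have -> : \sum_(j <- iota 1 m) (-1) ^+ (m.+1 - j) * (Bn j)%:R / (t0%:R - s0%:R)
             * gcoef (Lambda (t j)) z
      = - \sum_(j <- iota 1 m) (-1) ^+ (m - j) * (Bn j)%:R / (t0%:R - s0%:R)
             * gcoef (Lambda (t j)) z.
    rewrite -sumrN !big_seq; apply: eq_bigr => j; rewrite mem_iota => /andP[_ hj'].
    rewrite add1n ltnS in hj'.
    by rewrite subSn // exprS mulN1r !mulNr.
  have HS := K9 m hm.
  move: (\sum_(j <- iota 1 m) (-1) ^+ (m - j) * (Bn j)%:R * (t j)%:R) HS => S HS.
  move: (\sum_(j <- iota 1 m) _) => T.
  have -> : S = (s m.+1)%:R * (Bn m.+1)%:R - (-1) ^+ m * (t0%:R - s0%:R).
    by rewrite -HS; ring.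
  have s0' : (s m.+1)%:R != 0 :> rat by rewrite pnatr_eq0 -lt0n.
  rewrite exprS; field.
  by rewrite D0 s0'.
split.
  move=> z; rewrite (K10 n (leqnn n)) /gadd gcoef_cat gcoef_scale gcoef_sum big_map.
  by congr (_ + _); apply: eq_bigr => j _; rewrite [RHS]gcoef_scale.
have w0R : 1 - w0 != 0 by move: w0pos => /andP[_ h]; rewrite subr_eq0 eq_sym lt_eqF.
split.
  move=> z; rewrite /gadd !gcoef_cat !gcoef_scale !gcoef_sum !big_map.
  rewrite /Egr ?gcoef_scale ?mulr1n ?invr1 ?mul1r; congr (_ + _).
  rewrite !big_seq; apply: eq_bigr => j; rewrite mem_iota add1n ltnS => /andP[j1 jn].
  rewrite /Egr ?gcoef_scale mulrA; congr (_ * _).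
  have [_ tjp _ _] := K0 j jn.
  have tj0 : (t j)%:R != 0 :> rat by rewrite pnatr_eq0 -lt0n.
  have t00 : t0%:R != 0 :> rat by rewrite pnatr_eq0 -lt0n.
  have e : ((\prod_(1 <= i < j.+1) a i)%N%:R : rat) = (t j)%:R * (Bn j)%:R / t0%:R.
    by rewrite K7R // mulfK // natr_prod.
  rewrite e /w0; field.
  by rewrite tj0 t00 D0.
have E' : forall m, (m < n)%N -> (a m.+1)%:R * w m.+1 = 1 - w m.
  move=> m hm; have hj : (1 <= m.+1 <= n)%N by rewrite hm.
  have [_ E] := Hwj _ hj; move: E => /= E.
  by apply/eqP; rewrite eq_sym subr_eq; apply/eqP; exact: esym E.
have K12 : forall m, (m <= n)%N ->
    \prod_(1 <= j < m.+1) ((w j)^-1 - 1) * (1 - w0) = Pm m * (1 - w m).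
  elim => [|m IH] hm; first by rewrite /Pm !big_geq // mul1r Hw0 mul1r.
  have hj : (1 <= m.+1 <= n)%N by rewrite hm.
  have [/andP[p1 _] _] := Hwj _ hj.
  have wn0 : w m.+1 != 0 by rewrite gt_eqF.
  rewrite /Pm big_nat_recr; last by [].
  rewrite [in RHS]big_nat_recr; last by [].
  rewrite -/(Pm m) mulrAC IH; last exact: ltnW.
  rewrite -(E' m hm) /=; field.
  exact: wn0.
have K13 : forall m, (m <= n)%N -> Pm m * (1 - w m) = rhom m - (-1) ^+ m * w0.
  elim => [|m IH] hm.
    by rewrite /Pm big_geq // /rhom /= rho_nil Hw0; ring.
  rewrite /rhom rho_step -/(rhom m) /Pm big_nat_recr; last by [].
  rewrite -/(Pm m).
  have -> : Pm m * (a m.+1)%:R * (1 - w m.+1) =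
            Pm m * (a m.+1)%:R - Pm m * ((a m.+1)%:R * w m.+1) by ring.
  rewrite E' // IH; last exact: ltnW.
  rewrite exprS /=; ring.
rewrite expfzDr ?oppr_eq0 ?oner_eq0 //.
rewrite -exprnP exprN1 invrN1 mulrN1.
apply: (mulIf w0R); rewrite divfK // K12 // K13 //.
rewrite /rhom; ring.
Qed.
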